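(* For all positive integers $a,b$, the Aztec rectangle $\mathcal{AR}_{a,b}$ (with no defects) has a cover by L-trominoes if and only if $a(b+1)+b(a+1)\equiv 0 \pmod 3$.
   Context: A cell is a unit square $[i,i+1]\times[j,j+1]$ with $i,j\in\mathbb{Z}$, labelled by its coordinate $(i,j)$. A region is a finite set of cells whose union is connected (cells sharing an edge are adjacent). An L-tromino is a set of three cells equal to a $2\times 2$ block of cells with one cell removed, i.e. a translate of one of $\{(0,0),(1,0),(0,1)\}$, $\{(0,0),(1,0),(1,1)\}$, $\{(0,0),(0,1),(1,1)\}$, $\{(1,0),(0,1),(1,1)\}$. Some cells of a region may be designated as defects. A cover (tiling) of a region $R$ with defect set $D\subseteq R$ is a set of pairwise disjoint L-trominoes, each contained in $R\setminus D$, whose union is exactly $R\setminus D$. For positive integers $a,b$, the Aztec rectangle $\mathcal{AR}_{a,b}$ is (up to translation) the region consisting of the cells $(i,j)\in\mathbb{Z}^2$ with $0\le i+j\le 2b$ and $1\le j-i\le 2a+1$; it has $a$ cells along its southwestern side, $b$ cells along its northwestern side, and $a(b+1)+b(a+1)$ cells in total. *)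

(* Defs.v *)
From Stdlib Require Import ZArith List.
Import ListNotations.
Open Scope Z_scope.

(** A cell (i,j) is the unit square [i,i+1] x [j,j+1]. *)
Definition cell : Type := (Z * Z)%type.

Definition L_tromino (t : list cell) : Prop :=
  exists i j : Z,
    t = [(i, j); (i+1, j); (i, j+1)] \/
    t = [(i, j); (i+1, j); (i+1, j+1)] \/
    t = [(i, j); (i, j+1); (i+1, j+1)] \/
    t = [(i+1, j); (i, j+1); (i+1, j+1)].

Definition cover (R D : cell -> Prop) (ts : list (list cell)) : Prop :=
  (forall t, In t ts -> L_tromino t) /\
  NoDup (concat ts) /\
  (forall c : cell, In c (concat ts) <-> (R c /\ ~ D c)).

Definition aztec_rect (a b : Z) (c : cell) : Prop :=
  0 <= fst c + snd c <= 2 * b /\ 1 <= snd c - fst c <= 2 * a + 1.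

Definition no_defects : cell -> Prop := fun _ => False.

(* Main.v *)
Require Import Defs.
From Stdlib Require Import ZArith List Lia Permutation FinFun Bool.
Import ListNotations.
Open Scope Z_scope.

Definition zr (lo : Z) (n : nat) : list Z := map (fun k => lo + Z.of_nat k) (seq 0 n).
Lemma zr_In lo n x : In x (zr lo n) <-> lo <= x < lo + Z.of_nat n.
Proof.
  unfold zr; rewrite in_map_iff; split.
  - intros [k [Hk Hin]]. apply in_seq in Hin. lia.
  - intros H. exists (Z.to_nat (x - lo)). rewrite in_seq. lia.
Qed.

Definition P (u0 u1 v0 v1 : Z) (c : cell) : Prop :=
  u0 <= fst c + snd c <= u1 /\ v0 <= snd c - fst c <= v1.
Definition coverable (R : cell -> Prop) : Prop := exists ts, cover R no_defects ts.

Lemma cov_ext (R R' : cell -> Prop) : (forall c, R c <-> R' c) -> coverable R -> coverable R'.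
Proof.
  intros H [ts [H1 [H2 H3]]]. exists ts. split; [auto|split; [auto|]].
  intros c. rewrite H3, H. tauto.
Qed.

Lemma cov_union (R1 R2 : cell -> Prop) : (forall c, R1 c -> R2 c -> False) ->
  coverable R1 -> coverable R2 -> coverable (fun c => R1 c \/ R2 c).
Proof.
  intros Hd [ts1 [A1 [B1 C1]]] [ts2 [A2 [B2 C2]]]. exists (ts1 ++ ts2).
  unfold no_defects in *. split; [|split].
  - intros t Ht. apply in_app_or in Ht as [Ht|Ht]; auto.
  - rewrite concat_app. apply NoDup_app; auto.
    intros c Hc1 Hc2. apply C1 in Hc1. apply C2 in Hc2. apply (Hd c); tauto.
  - intros c. rewrite concat_app, in_app_iff, C1, C2. tauto.
Qed.

Definition shiftc (dx dy : Z) (c : cell) : cell := (fst c + dx, snd c + dy).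

Lemma cov_shift u0 u1 v0 v1 p q : coverable (P u0 u1 v0 v1) ->
  coverable (P (u0 + 2*p) (u1 + 2*p) (v0 + 2*q) (v1 + 2*q)).
Proof.
  intros [ts [A [B C]]]. exists (map (map (shiftc (p - q) (p + q))) ts).
  unfold no_defects in *. split; [|split].
  - intros t Ht. apply in_map_iff in Ht as [t0 [<- Ht0]].
    destruct (A t0 Ht0) as [i [j [E|[E|[E|E]]]]]; subst t0;
      exists (i + (p - q)), (j + (p + q)); unfold shiftc; simpl;
      [left|right;left|right;right;left|right;right;right];
      repeat (match goal with |- cons _ _ = cons _ _ => f_equal | |- pair _ _ = pair _ _ => f_equal end); first [reflexivity | ring].
  - rewrite <- concat_map. apply Injective_map_NoDup; auto.
    intros [x y] [z w] H; unfold shiftc in H; simpl in H; inversion H; f_equal; lia.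
  - intros [i j]. rewrite <- concat_map, in_map_iff. split.
    + intros [[x y] [E H]]. apply C in H as [H _]. unfold shiftc in E; simpl in E.
      inversion E; subst. unfold P in *; cbn [fst snd] in *. lia.
    + intros [H _]. exists (i - (p - q), j - (p + q)). unfold shiftc; simpl. split.
      f_equal; ring. apply C. unfold P in *; cbn [fst snd] in *. split; [lia|tauto].
Qed.

Lemma split_u u0 m u1 v0 v1 : coverable (P u0 m v0 v1) -> coverable (P (m+1) u1 v0 v1) ->
  u0 <= m + 1 -> m <= u1 -> coverable (P u0 u1 v0 v1).
Proof.
  intros H1 H2 Ha Hb. eapply cov_ext; [|apply cov_union; [|exact H1|exact H2]].
  - intros c; unfold P; lia.
  - intros c; unfold P; lia.
Qed.

Lemma split_v u0 u1 v0 m v1 : coverable (P u0 u1 v0 m) -> coverable (P u0 u1 (m+1) v1) ->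
  v0 <= m + 1 -> m <= v1 -> coverable (P u0 u1 v0 v1).
Proof.
  intros H1 H2 Ha Hb. eapply cov_ext; [|apply cov_union; [|exact H1|exact H2]].
  - intros c; unfold P; lia.
  - intros c; unfold P; lia.
Qed.

Definition tro (k : nat) (i j : Z) : list cell :=
  match k with
  | O => [(i, j); (i+1, j); (i, j+1)]
  | 1%nat => [(i, j); (i+1, j); (i+1, j+1)]
  | 2%nat => [(i, j); (i, j+1); (i+1, j+1)]
  | _ => [(i+1, j); (i, j+1); (i+1, j+1)]
  end.

Lemma tro_L k i j : L_tromino (tro k i j).
Proof.
  exists i, j. destruct k as [|[|[|k]]]; simpl; tauto.
Qed.

Definition ceqb (c d : cell) : bool := (fst c =? fst d) && (snd c =? snd d).
Lemma ceqb_ok c d : ceqb c d = true -> c = d.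
Proof.
  destruct c, d; unfold ceqb; simpl; rewrite andb_true_iff, !Z.eqb_eq. intros [-> ->]; auto.
Qed.

Fixpoint nodupb (l : list cell) : bool :=
  match l with
  | [] => true
  | x :: l => negb (existsb (ceqb x) l) && nodupb l
  end.

Lemma nodupb_ok l : nodupb l = true -> NoDup l.
Proof.
  induction l as [|x l IH]; simpl; intros H; constructor.
  - rewrite andb_true_iff in H. destruct H as [H _]. intros Hin.
    assert (existsb (ceqb x) l = true).
    { apply existsb_exists. exists x. split; auto. unfold ceqb; rewrite !Z.eqb_refl; auto. }
    rewrite H0 in H. discriminate.
  - apply IH. rewrite andb_true_iff in H; tauto.
Qed.

Definition Pb (u0 u1 v0 v1 : Z) (c : cell) : bool :=
  (u0 <=? fst c + snd c) && (fst c + snd c <=? u1) && (v0 <=? snd c - fst c) && (snd c - fst c <=? v1).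
Lemma Pb_ok u0 u1 v0 v1 c : Pb u0 u1 v0 v1 c = true <-> P u0 u1 v0 v1 c.
Proof. unfold Pb, P. rewrite !andb_true_iff, !Z.leb_le. tauto. Qed.

Definition box_all (f : cell -> bool) : bool :=
  forallb (fun i => forallb (fun j => f (i, j)) (zr (-1) 10)) (zr (-4) 9).

Lemma box_all_ok f i j : box_all f = true -> -4 <= i <= 4 -> -1 <= j <= 8 -> f (i, j) = true.
Proof.
  unfold box_all. intros H Hi Hj. rewrite forallb_forall in H.
  assert (Hi' : In i (zr (-4) 9)) by (apply zr_In; lia).
  specialize (H i Hi'). rewrite forallb_forall in H. apply H. apply zr_In; lia.
Qed.

Definition mkts (d : list (nat * Z * Z)) : list (list cell) :=
  map (fun x => match x with (k, i, j) => tro k i j end) d.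

Definition check (u0 u1 v0 v1 : Z) (d : list (nat * Z * Z)) : bool :=
  let l := concat (mkts d) in
  (-8 <=? u0 - v1) && (u1 - v0 <=? 8) && (-2 <=? u0 + v0) && (u1 + v1 <=? 16) &&
  nodupb l && forallb (Pb u0 u1 v0 v1) l &&
  box_all (fun c => implb (Pb u0 u1 v0 v1 c) (existsb (ceqb c) l)).

Lemma check_ok u0 u1 v0 v1 d : check u0 u1 v0 v1 d = true -> coverable (P u0 u1 v0 v1).
Proof.
  unfold check. rewrite !andb_true_iff, !Z.leb_le.
  intros [[[[[[H1 H2] H3] H4] H5] H6] H7]. exists (mkts d). unfold no_defects.
  split; [|split].
  - intros t Ht. unfold mkts in Ht. apply in_map_iff in Ht as [[[k i] j] [<- _]]. apply tro_L.
  - now apply nodupb_ok.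
  - intros [i j]. split.
    + intros Hin. rewrite forallb_forall in H6. split; [|tauto]. apply Pb_ok. auto.
    + intros [HP _]. assert (HP' := HP). unfold P in HP'; simpl in HP'.
      pose proof (box_all_ok _ i j H7 ltac:(lia) ltac:(lia)) as Hb. simpl in Hb.
      apply Pb_ok in HP. rewrite HP in Hb. simpl in Hb.
      apply existsb_exists in Hb as [x [Hx Ex]]. apply ceqb_ok in Ex. subst; auto.
Qed.

Lemma B_AR22 : coverable (P 0 4 1 5).
Proof. apply (check_ok _ _ _ _ [(0%nat, -2, 2); (1%nat, -1, 1); (2%nat, -1, 3); (3%nat, 0, 2)]). vm_compute. reflexivity. Qed.
Lemma B_AR33 : coverable (P 0 6 1 7).
Proof. apply (check_ok _ _ _ _ [(0%nat, -3, 3); (1%nat, -2, 2); (0%nat, -2, 4); (1%nat, -1, 1); (2%nat, -1, 5); (3%nat, 0, 2); (2%nat, 0, 4); (3%nat, 1, 3)]). vm_compute. reflexivity. Qed.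
Lemma B_S2 : coverable (P 1 6 1 5).
Proof. apply (check_ok _ _ _ _ [(1%nat, -2, 3); (3%nat, -1, 1); (3%nat, 0, 2); (2%nat, 0, 4); (3%nat, 1, 3)]). vm_compute. reflexivity. Qed.
Lemma B_S3 : coverable (P 1 6 1 7).
Proof. apply (check_ok _ _ _ _ [(1%nat, -3, 4); (1%nat, -2, 3); (3%nat, -1, 1); (2%nat, -1, 5); (3%nat, 0, 2); (2%nat, 0, 4); (3%nat, 1, 3)]). vm_compute. reflexivity. Qed.
Lemma B_blk : coverable (P 1 6 2 7).
Proof. apply (check_ok _ _ _ _ [(1%nat, -3, 4); (1%nat, -2, 3); (1%nat, -1, 2); (2%nat, -1, 5); (2%nat, 0, 4); (2%nat, 1, 3)]). vm_compute. reflexivity. Qed.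
Lemma B_V2 : coverable (P 0 4 2 7).
Proof. apply (check_ok _ _ _ _ [(0%nat, -3, 3); (3%nat, -2, 1); (2%nat, -2, 4); (2%nat, -1, 3); (2%nat, 0, 2)]). vm_compute. reflexivity. Qed.
Lemma B_V3 : coverable (P 0 6 2 7).
Proof. apply (check_ok _ _ _ _ [(0%nat, -3, 3); (3%nat, -2, 1); (0%nat, -2, 4); (3%nat, -1, 2); (2%nat, -1, 5); (2%nat, 0, 4); (2%nat, 1, 3)]). vm_compute. reflexivity. Qed.

Lemma NoDup_prod {A B} (l : list A) (l' : list B) :
  NoDup l -> NoDup l' -> NoDup (list_prod l l').
Proof.
  induction 1 as [|x l Hx Hl IH]; intros Hl'; simpl; [constructor|].
  apply NoDup_app.
  - apply Injective_map_NoDup; [intros y z H; now inversion H | exact Hl'].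
  - now apply IH.
  - intros [p q] Hin Hin2. apply in_map_iff in Hin as [y [Hy _]].
    inversion Hy; subst. apply in_prod_iff in Hin2 as [Hp _]. contradiction.
Qed.

Lemma zr_NoDup lo n : NoDup (zr lo n).
Proof. apply Injective_map_NoDup; [intros x y H; lia | apply seq_NoDup]. Qed.

Lemma zr_length lo n : length (zr lo n) = n.
Proof. unfold zr; now rewrite length_map, length_seq. Qed.

Definition f1 (st : Z * Z) : cell := (fst st - snd st, fst st + snd st).
Definition f2 (st : Z * Z) : cell := (fst st - snd st, fst st + snd st + 1).

Definition enumAR (a b : Z) : list cell :=
  map f1 (list_prod (zr 0 (Z.to_nat b + 1)) (zr 1 (Z.to_nat a))) ++
  map f2 (list_prod (zr 0 (Z.to_nat b)) (zr 0 (Z.to_nat a + 1))).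

Lemma enumAR_NoDup a b : NoDup (enumAR a b).
Proof.
  unfold enumAR. apply NoDup_app.
  - apply Injective_map_NoDup. intros [x y] [z w] H; unfold f1 in H; simpl in H.
    inversion H. f_equal; lia.
    apply NoDup_prod; apply zr_NoDup.
  - apply Injective_map_NoDup. intros [x y] [z w] H; unfold f2 in H; simpl in H.
    inversion H. f_equal; lia.
    apply NoDup_prod; apply zr_NoDup.
  - intros c H1 H2. apply in_map_iff in H1 as [[x y] [E1 _]].
    apply in_map_iff in H2 as [[z w] [E2 _]]. subst c. unfold f1, f2 in E2; simpl in E2.
    inversion E2. lia.
Qed.

Lemma enumAR_In a b c : 0 <= a -> 0 <= b -> (In c (enumAR a b) <-> aztec_rect a b c).
Proof.
  intros Ha Hb. unfold enumAR, aztec_rect. rewrite in_app_iff, !in_map_iff.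
  destruct c as [i j]; cbn [fst snd]. split.
  - intros [[[x y] [E Hin]] | [[x y] [E Hin]]]; unfold f1, f2 in E; cbn [fst snd] in E;
      inversion E; subst; apply in_prod_iff in Hin as [H1 H2];
      rewrite zr_In in H1, H2; rewrite ?Nat2Z.inj_add, ?Z2Nat.id in H1, H2 by lia; lia.
  - intros H. destruct (Z.Even_or_Odd (i + j)) as [[s Hs]|[s Hs]].
    + left. exists (s, s - i). unfold f1; cbn [fst snd]. split. f_equal; lia.
      apply in_prod_iff; rewrite !zr_In, ?Nat2Z.inj_add, ?Z2Nat.id by lia; lia.
    + right. exists (s, s - i). unfold f2; cbn [fst snd]. split. f_equal; lia.
      apply in_prod_iff; rewrite !zr_In, ?Nat2Z.inj_add, ?Z2Nat.id by lia; lia.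
Qed.

Lemma enumAR_length a b : 0 <= a -> 0 <= b ->
  Z.of_nat (length (enumAR a b)) = a * (b + 1) + b * (a + 1).
Proof.
  intros Ha Hb. unfold enumAR. rewrite length_app, !length_map, !length_prod, !zr_length.
  rewrite Nat2Z.inj_add, !Nat2Z.inj_mul, !Nat2Z.inj_add, !Z2Nat.id by lia. lia.
Qed.

Lemma concat_len3 (ts : list (list cell)) :
  (forall t, In t ts -> L_tromino t) -> length (concat ts) = (3 * length ts)%nat.
Proof.
  induction ts as [|t ts IH]; intros H; simpl; [reflexivity|].
  rewrite length_app, IH by (intros; apply H; simpl; auto).
  destruct (H t (or_introl eq_refl)) as [i [j [E|[E|[E|E]]]]]; subst; simpl; lia.
Qed.

Lemma count_dir a b ts : 0 < a -> 0 < b -> cover (aztec_rect a b) no_defects ts ->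
  (a * (b + 1) + b * (a + 1)) mod 3 = 0.
Proof.
  intros Ha Hb [HL [HN HM]].
  assert (Hp : Permutation (concat ts) (enumAR a b)).
  { apply NoDup_Permutation; auto. apply enumAR_NoDup.
    intros c. rewrite HM, enumAR_In by lia. unfold no_defects; tauto. }
  apply Permutation_length in Hp. rewrite concat_len3 in Hp by auto.
  rewrite <- enumAR_length by lia. rewrite <- Hp, Nat2Z.inj_mul.
  rewrite Z.mul_comm, Z_mod_mult. reflexivity.
Qed.

Lemma shift_to u0 u1 v0 v1 p q u0' u1' v0' v1' : coverable (P u0 u1 v0 v1) ->
  u0' = u0 + 2*p -> u1' = u1 + 2*p -> v0' = v0 + 2*q -> v1' = v1 + 2*q ->
  coverable (P u0' u1' v0' v1').
Proof. intros H -> -> -> ->. now apply cov_shift. Qed.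

Lemma S_step a : 0 <= a -> coverable (P 1 6 1 (2*a+1)) -> coverable (P 1 6 1 (2*(a+3)+1)).
Proof.
  intros Ha H. apply (split_v _ _ _ (2*a+1)); [exact H| |lia|lia].
  apply (shift_to _ _ _ _ 0 a _ _ _ _ B_blk); lia.
Qed.

Lemma ARa_step a b : 0 <= a -> 0 <= b -> coverable (P 0 (2*b) 1 (2*a+1)) ->
  coverable (P 0 (2*b) 2 7) -> coverable (P 0 (2*b) 1 (2*(a+3)+1)).
Proof.
  intros Ha Hb H V. apply (split_v _ _ _ (2*a+1)); [exact H| |lia|lia].
  apply (shift_to _ _ _ _ 0 a _ _ _ _ V); lia.
Qed.

Lemma ARb_step a b : 0 <= a -> 0 <= b -> coverable (P 0 (2*b) 1 (2*a+1)) ->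
  coverable (P 1 6 1 (2*a+1)) -> coverable (P 0 (2*(b+3)) 1 (2*a+1)).
Proof.
  intros Ha Hb H S. apply (split_u _ (2*b)); [exact H| |lia|lia].
  apply (shift_to _ _ _ _ b 0 _ _ _ _ S); lia.
Qed.

Lemma S_all (n : nat) : coverable (P 1 6 1 (2*(3*Z.of_nat n+2)+1)) /\
                        coverable (P 1 6 1 (2*(3*Z.of_nat n+3)+1)).
Proof.
  induction n as [|n [IH1 IH2]].
  - split; [exact B_S2 | exact B_S3].
  - rewrite Nat2Z.inj_succ.
    replace (3 * Z.succ (Z.of_nat n) + 2) with ((3 * Z.of_nat n + 2) + 3) by lia.
    replace (3 * Z.succ (Z.of_nat n) + 3) with ((3 * Z.of_nat n + 3) + 3) by lia.
    split; apply S_step; auto; lia.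
Qed.

Lemma AR_base (n : nat) : coverable (P 0 (2*2) 1 (2*(3*Z.of_nat n+2)+1)) /\
                          coverable (P 0 (2*3) 1 (2*(3*Z.of_nat n+3)+1)).
Proof.
  induction n as [|n [IH1 IH2]].
  - split; [exact B_AR22 | exact B_AR33].
  - rewrite Nat2Z.inj_succ.
    replace (3 * Z.succ (Z.of_nat n) + 2) with ((3 * Z.of_nat n + 2) + 3) by lia.
    replace (3 * Z.succ (Z.of_nat n) + 3) with ((3 * Z.of_nat n + 3) + 3) by lia.
    split; apply ARa_step; auto; try lia; [exact B_V2 | exact B_V3].
Qed.

Lemma AR_all (n m : nat) :
  coverable (P 0 (2*(3*Z.of_nat m+2)) 1 (2*(3*Z.of_nat n+2)+1)) /\
  coverable (P 0 (2*(3*Z.of_nat m+3)) 1 (2*(3*Z.of_nat n+3)+1)).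
Proof.
  induction m as [|m [IH1 IH2]].
  - exact (AR_base n).
  - rewrite Nat2Z.inj_succ.
    replace (3 * Z.succ (Z.of_nat m) + 2) with ((3 * Z.of_nat m + 2) + 3) by lia.
    replace (3 * Z.succ (Z.of_nat m) + 3) with ((3 * Z.of_nat m + 3) + 3) by lia.
    destruct (S_all n) as [S1 S2].
    split; apply ARb_step; auto; lia.
Qed.

Lemma construct_dir a b : 0 < a -> 0 < b -> (a * (b + 1) + b * (a + 1)) mod 3 = 0 ->
  exists ts, cover (aztec_rect a b) no_defects ts.
Proof.
  intros Ha Hb H.
  assert (Hc : (exists x y, 0 <= x /\ 0 <= y /\ a = 3*x+2 /\ b = 3*y+2) \/
               (exists x y, 0 <= x /\ 0 <= y /\ a = 3*x+3 /\ b = 3*y+3)).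
  { apply Z.mod_divide in H; [|lia]. destruct H as [k Hk].
    pose proof (Z.div_mod a 3 ltac:(lia)) as Ea. pose proof (Z.mod_pos_bound a 3 ltac:(lia)) as Ba.
    pose proof (Z.div_mod b 3 ltac:(lia)) as Eb. pose proof (Z.mod_pos_bound b 3 ltac:(lia)) as Bb.
    set (x := a / 3) in *. set (y := b / 3) in *.
    set (r := a mod 3) in *. set (s := b mod 3) in *.
    assert (Hr : r = 0 \/ r = 1 \/ r = 2) by lia.
    assert (Hs : s = 0 \/ s = 1 \/ s = 2) by lia.
    rewrite Ea, Eb in Hk. clearbody x y r s.
    destruct Hr as [-> | [-> | ->]], Hs as [-> | [-> | ->]];
      try (exfalso; assert (Exy : exists w, w = x*y) by eauto; destruct Exy as [w Ew];
           ring_simplify in Hk; rewrite <- ?Ew in Hk;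
           try (replace (18 * x * y) with (18 * w) in Hk by (subst; ring)); lia).
    - right. exists (x - 1), (y - 1). lia.
    - left. exists x, y. lia. }
  destruct Hc as [[x [y [Hx [Hy [-> ->]]]]] | [x [y [Hx [Hy [-> ->]]]]]].
  - destruct (AR_all (Z.to_nat x) (Z.to_nat y)) as [C _].
    rewrite !Z2Nat.id in C by lia. exact C.
  - destruct (AR_all (Z.to_nat x) (Z.to_nat y)) as [_ C].
    rewrite !Z2Nat.id in C by lia. exact C.
Qed.

Theorem theorem1 :
  forall a b : Z, 0 < a -> 0 < b ->
    ((exists ts : list (list cell), cover (aztec_rect a b) no_defects ts) <->
     (a * (b + 1) + b * (a + 1)) mod 3 = 0).
Proof.
  intros a b Ha Hb. split.
  - intros [ts H]. exact (count_dir a b ts Ha Hb H).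
  - apply construct_dir; auto.
Qed.
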